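(* Let $H$ be an inner product space over $\mathbb{K}\in\{\mathbb{R},\mathbb{C}\}$. Let $x,y\in H$ with $x\ne0$, $y\neq 0$, and let $a,b\in\mathbb{K}$ satisfy $$\operatorname{Re}\langle x-ay,\ by-x\rangle\ge 0 .$$ (a) If $\operatorname{Re}(a\bar b)>0$, then $$\|x\|^2\|y\|^2\le \frac14\,\frac{\big(\operatorname{Re}[(\bar a+\bar b)\langle x,y\rangle]\big)^2}{\operatorname{Re}(a\bar b)}\le \frac14\,\frac{|a+b|^2}{\operatorname{Re}(a\bar b)}\,|\langle x,y\rangle|^2 .$$ The constant $\tfrac14$ is best possible in both inequalities. That is, for every $l\in(0,\tfrac14)$ there exist $H$, nonzero $x,y\in H$ and $a,b\in\mathbb{K}$ with $\operatorname{Re}\langle x-ay,by-x\rangle\ge0$ and $\operatorname{Re}(a\bar b)>0$ for which $\|x\|^2\|y\|^2> l\,\frac{(\operatorname{Re}[(\bar a+\bar b)\langle x,y\rangle])^2}{\operatorname{Re}(a\bar b)}$. Likewise there exist such data for which $\|x\|^2\|y\|^2> l\,\frac{|a+b|^2}{\operatorname{Re}(a\bar b)}|\langle x,y\rangle|^2$. (b) If $\operatorname{Re}(a\bar b)=0$, then $$\|x\|^2\le \operatorname{Re}[(\bar a+\bar b)\langle x,y\rangle]\le |a+b|\,|\langle x,y\rangle| .$$ (c) If $\operatorname{Re}(a\bar b)<0$, then $$\|x\|^2\le \operatorname{Re}[(\bar a+\bar b)\langle x,y\rangle]-\operatorname{Re}(a\bar b)\|y\|^2\le |a+b|\,|\langle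 x,y\rangle|-\operatorname{Re}(a\bar b)\|y\|^2 .$$
   Context: The inner product $\langle\cdot,\cdot\rangle$ is linear in the first argument and conjugate-linear in the second. $\|u\|=\sqrt{\langle u,u\rangle}$ is the induced norm, and $\bar a$ denotes the complex conjugate of $a$ (equal to $a$ when $\mathbb{K}=\mathbb{R}$). *)

(* Defs.v *)
(* scalars K are a numFieldType equipped with a conjugation;
   instantiated with K = R (conj = id) and K = R[i] (conj = Num.conj),
   for R : realType (the real numbers). *)
From mathcomp Require Import all_boot all_order all_algebra all_reals.
From mathcomp Require Export complex.
Set Implicit Arguments. Unset Strict Implicit. Unset Printing Implicit Defensive.
Import Order.TTheory GRing.Theory Num.Theory.
Local Open Scope ring_scope.

Definition ReK (K : numFieldType) (conj : K -> K) (z : K) : K := (z + conj z) / 2.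

Definition is_inner_product (K : numFieldType) (conj : K -> K)
    (V : lmodType K) (ip : V -> V -> K) : Prop :=
  [/\ forall (c : K) (u v w : V), ip (c *: u + v) w = c * ip u w + ip v w,
      forall u v : V, ip v u = conj (ip u v),
      forall u : V, 0 <= ip u u
    & forall u : V, ip u u = 0 -> u = 0].

(* Note: ||u||^2 = <u,u> is written directly as [ip u u]. *)
Definition theorem2_for (K : numFieldType) (conj : K -> K) : Prop :=
  (forall (V : lmodType K) (ip : V -> V -> K), is_inner_product conj ip ->
   forall (x y : V) (a b : K), x != 0 -> y != 0 ->
   0 <= ReK conj (ip (x - a *: y) (b *: y - x)) ->
   let r := ReK conj (a * conj b) in
   let s := ReK conj ((conj a + conj b) * ip x y) in
   (0 < r ->
      ip x x * ip y y <= 4^-1 * s ^+ 2 / r /\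
      4^-1 * s ^+ 2 / r <= 4^-1 * (`|a + b| ^+ 2 / r) * `|ip x y| ^+ 2) /\
   (r = 0 -> ip x x <= s /\ s <= `|a + b| * `|ip x y|) /\
   (r < 0 -> ip x x <= s - r * ip y y /\
             s - r * ip y y <= `|a + b| * `|ip x y| - r * ip y y)) /\
  (forall l : K, 0 < l -> l < 4^-1 ->
    exists (V : lmodType K) (ip : V -> V -> K), is_inner_product conj ip /\
    exists (x y : V) (a b : K), [/\ x != 0, y != 0,
      0 <= ReK conj (ip (x - a *: y) (b *: y - x)),
      0 < ReK conj (a * conj b) &
      l * (ReK conj ((conj a + conj b) * ip x y)) ^+ 2 / ReK conj (a * conj b)
        < ip x x * ip y y]) /\
  (forall l : K, 0 < l -> l < 4^-1 ->
    exists (V : lmodType K) (ip : V -> V -> K), is_inner_product conj ip /\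
    exists (x y : V) (a b : K), [/\ x != 0, y != 0,
      0 <= ReK conj (ip (x - a *: y) (b *: y - x)),
      0 < ReK conj (a * conj b) &
      l * (`|a + b| ^+ 2 / ReK conj (a * conj b)) * `|ip x y| ^+ 2
        < ip x x * ip y y]).

(* Main.v *)
Require Import Defs.
From mathcomp Require Import all_boot all_order all_algebra all_reals.
From mathcomp Require Import complex ring.
Set Implicit Arguments. Unset Strict Implicit. Unset Printing Implicit Defensive.
Import Order.TTheory GRing.Theory Num.Theory.
Local Open Scope ring_scope.

Section Gen.
Variables (K : numFieldType) (conj : K -> K).
Hypothesis cD : forall x y, conj (x + y) = conj x + conj y.
Hypothesis cM : forall x y, conj (x * y) = conj x * conj y.
Hypothesis cK : forall x, conj (conj x) = x.
Hypothesis c1 : conj 1 = 1.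
Hypothesis Rereal : forall z, ReK conj z \is Num.real.
Hypothesis Renorm : forall z, `|ReK conj z| <= `|z|.
Hypothesis normc : forall z, `|conj z| = `|z|.
Hypothesis mc_ge0 : forall z, 0 <= z * conj z.
Hypothesis mc_eq0 : forall z, z * conj z = 0 -> z = 0.

Lemma c0 : conj 0 = 0.
Proof. by apply: (addrI (conj 0)); rewrite -cD !addr0. Qed.
Lemma cN x : conj (- x) = - conj x.
Proof. apply/eqP; rewrite -subr_eq0 opprK -cD addNr c0 //. Qed.

Lemma ReD z w : ReK conj (z + w) = ReK conj z + ReK conj w.
Proof. rewrite /ReK cD; ring. Qed.
Lemma ReN z : ReK conj (- z) = - ReK conj z.
Proof. rewrite /ReK cN; ring. Qed.
Lemma Rec z : ReK conj (conj z) = ReK conj z.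
Proof. rewrite /ReK cK; ring. Qed.
Lemma Re_self z : conj z = z -> ReK conj z = z.
Proof. move=> h; rewrite /ReK h; by field. Qed.

Lemma main_part (V : lmodType K) (ip : V -> V -> K) : is_inner_product conj ip ->
   forall (x y : V) (a b : K),
   0 <= ReK conj (ip (x - a *: y) (b *: y - x)) ->
   let r := ReK conj (a * conj b) in
   let s := ReK conj ((conj a + conj b) * ip x y) in
   (0 < r ->
      ip x x * ip y y <= 4^-1 * s ^+ 2 / r /\
      4^-1 * s ^+ 2 / r <= 4^-1 * (`|a + b| ^+ 2 / r) * `|ip x y| ^+ 2) /\
   (r = 0 -> ip x x <= s /\ s <= `|a + b| * `|ip x y|) /\
   (r < 0 -> ip x x <= s - r * ip y y /\
             s - r * ip y y <= `|a + b| * `|ip x y| - r * ip y y).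
Proof.
case=> lin sym pos _ x y a b H r s.
have ip0 w : ip 0 w = 0.
  have h := lin 1 0 0 w; rewrite scale1r !addr0 mul1r in h.
  by apply: (addrI (ip 0 w)); rewrite -h addr0.
have ipD u v w : ip (u + v) w = ip u w + ip v w by rewrite -{1}[u]scale1r lin mul1r.
have ipZ c u w : ip (c *: u) w = c * ip u w by rewrite -[c *: u]addr0 lin ip0 addr0.
have ipN u w : ip (- u) w = - ip u w by rewrite -scaleN1r ipZ mulN1r.
have ipDr u v w : ip w (u + v) = ip w u + ip w v by rewrite sym ipD cD -!sym.
have ipZr c u w : ip w (c *: u) = conj c * ip w u by rewrite sym ipZ cM -sym.
have ipNr u w : ip w (- u) = - ip w u by rewrite sym ipN cN -sym.
have rA : conj (ip x x) = ip x x by rewrite -sym.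
have rB : conj (ip y y) = ip y y by rewrite -sym.
have E : ReK conj (ip (x - a *: y) (b *: y - x)) = s - ip x x - r * ip y y.
  rewrite ipD ipN ipZ !ipDr !ipNr !ipZr.
  rewrite /s /r /ReK !(cD, cM, cN, cK) -!sym; by field.
have key : ip x x + r * ip y y <= s.
  by move: H; rewrite E subr_ge0 lerBrDr addrC.
have A0 : 0 <= ip x x := pos x.
have B0 : 0 <= ip y y := pos y.
have sle : s <= `|a + b| * `|ip x y|.
  apply: le_trans (real_ler_norm (Rereal _)) _.
  apply: le_trans (Renorm _) _.
  by rewrite normrM -cD normc.
have sR : s \is Num.real := Rereal _.
split; [|split].
- move=> r0.
  have s0 : 0 <= s.
    apply: le_trans key; apply: addr_ge0 => //; apply: mulr_ge0 => //; exact: ltW.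
  have rB0 : 0 <= r * ip y y by apply: mulr_ge0 => //; exact: ltW.
  have h1 : (ip x x + r * ip y y) ^+ 2 <= s ^+ 2.
    by rewrite ler_pXn2r // ?nnegrE // addr_ge0.
  have h2 : 0 <= (ip x x - r * ip y y) ^+ 2.
    by rewrite -realEsqr realB // ger0_real.
  split.
    rewrite ler_pdivlMr // [4^-1 * _]mulrC ler_pdivlMr ?ltr0n //.
    apply: le_trans h1.
    rewrite -subr_ge0.
    have -> : (ip x x + r * ip y y) ^+ 2 - ip x x * ip y y * r * 4%:R = (ip x x - r * ip y y) ^+ 2 by ring.
    exact: h2.
  have -> : 4^-1 * (`|a + b| ^+ 2 / r) * `|ip x y| ^+ 2 = 4^-1 * (`|a + b| * `|ip x y|) ^+ 2 / r by ring.
  apply: ler_wpM2r; first by rewrite invr_ge0 ltW.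
  apply: ler_wpM2l; first by rewrite invr_ge0 ler0n.
  by rewrite ler_pXn2r // ?nnegrE // mulr_ge0.
- move=> r0; split => //; move: key; by rewrite r0 mul0r addr0.
- move=> r0; split; last by rewrite lerD2r.
  by rewrite lerBrDr.
Qed.

Definition ipK (u v : K^o) : K := u * conj v.

Lemma ipK_ok : is_inner_product conj ipK.
Proof.
split.
- by move=> c u v w; rewrite /ipK mulrDl mulrA.
- by move=> u v; rewrite /ipK cM cK mulrC.
- by move=> u; exact: mc_ge0.
- by move=> u; exact: mc_eq0.
Qed.

Lemma sharp_data :
  let x : K^o := 1 in
  [/\ x != 0, 0 <= ReK conj (ipK (x - 1 *: x) (1 *: x - x)),
      ReK conj (1 * conj 1) = 1,
      ReK conj ((conj 1 + conj 1) * ipK x x) = 2 &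
      ipK x x = 1].
Proof.
rewrite /= /ipK; split.
- exact: oner_neq0.
- by rewrite scale1r subrr mul0r (Re_self c0).
- by rewrite c1 mul1r (Re_self c1).
- by rewrite c1 !mulr1 (@Re_self (1+1)) // cD c1.
- by rewrite c1 mul1r.
Qed.

Lemma gen_thm : theorem2_for conj.
Proof.
split; first by move=> V ip hip x y a b _ _; exact: main_part.
have [x0 H0 r1 s2 i1] := sharp_data.
have l4' (l : K) : l < 4^-1 -> l * 4 < 1.
  by move=> h; move: h; rewrite -[4^-1]div1r ltr_pdivlMr // ltr0n.
split=> l l0 l4; exists (K^o), ipK; (split; first exact: ipK_ok);
  exists 1, 1, 1, 1; split => //; rewrite ?r1 ?s2 ?i1.
- exact: ltr01.
- rewrite mulr1; apply: (le_lt_trans _ (l4' l l4)); rewrite le_eqVlt; apply/orP; left; apply/eqP.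
  rewrite divr1; ring.
- exact: ltr01.
- rewrite mulr1; apply: (le_lt_trans _ (l4' l l4)); rewrite le_eqVlt; apply/orP; left; apply/eqP.
  rewrite divr1 normr1 expr1n mulr1 ger0_norm ?addr_ge0 ?ler01 //; ring.
Qed.
End Gen.

Theorem theorem2 (R : realType) :
  theorem2_for (K := R) idfun /\ theorem2_for (K := R[i]) Num.conj.
Proof.
split.
- apply: gen_thm => //.
  + by move=> z; exact: num_real.
  + move=> z; rewrite /ReK /= (_ : (z + z) / 2 = z) //; by field.
  + by move=> z; rewrite /= -expr2 sqr_ge0.
  + by move=> z /= /eqP; rewrite mulf_eq0 orbb => /eqP.
- apply: gen_thm.
  + exact: rmorphD.
  + exact: rmorphM.
  + exact: conjCK.
  + exact: rmorph1.
  + by move=> z; rewrite /ReK -ReE; exact: Creal_Re.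
  + by move=> z; rewrite /ReK -ReE; exact: (leif_normC_Re_Creal z).1.
  + exact: norm_conjC.
  + exact: mul_conjC_ge0.
  + by move=> z /eqP; rewrite mul_conjC_eq0 => /eqP.
Qed.
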